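(* Let $(\mathcal{A},\varphi)$ be a tracial noncommutative probability space with universal enveloping traffic space $(\mathcal{B},\psi)$, and let $t\in\Theta(\mathcal{B})$ be (the class of) a graph monomial such that either $v_{\mathrm{in}}=v_{\mathrm{out}}$ or some simple cycle of its underlying undirected multigraph passes through both $v_{\mathrm{in}}$ and $v_{\mathrm{out}}$. Then $t\equiv\Delta(t)\pmod\psi$.
   Context: $(\mathcal{A},\varphi)$: unital complex algebra with unital tracial linear functional; free cumulants $\kappa_n$ determined by $\varphi(a_1\cdots a_n)=\sum_{\pi\in NC(n)}\prod_{B\in\pi}\kappa_{|B|}[(a_i)_{i\in B}]$. A graph monomial in $\mathcal{A}$ is a finite connected directed multigraph (loops, parallel edges allowed) with distinguished, not necessarily distinct, vertices $v_{\mathrm{in}},v_{\mathrm{out}}$ and edge labels in $\mathcal{A}$, up to isomorphism. $\iota(a)$: two vertices, one edge from $v_{\mathrm{in}}$ to $v_{\mathrm{out}}$ labelled $a$. Substitution $Z_g(t_1,\dots,t_K)$ for a connected bi-rooted multidigraph $g$ with ordered edges $e_1,\dots,e_K$ replaces each $e_i$ by a copy of $t_i$, identifying $\mathrm{src}(e_i)$ with the input and $\mathrm{tgt}(e_i)$ with the output of $t_i$; the product $t_1t_2$ identifies the input of $t_1$ with the output of $t_2$ (output of $t_1$, input of $t_2$ become output, input). $\mathcal{B}=\mathcal{G}(\mathcal{A})$ is the span of graph monomials modulo the span of $Z_g(\iota(a_1),\dots,\iota(a_K))-Z_g(P(\iota(b_1),\dots,\iota(b_n)),\iota(a_2),\dots)$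 (any edge position) for $a_1=P(b_1,\dots,b_n)$, $P$ a noncommutative polynomial. $\Delta(t)$ is the graph monomial obtained from $t$ by identifying $v_{\mathrm{in}}$ and $v_{\mathrm{out}}$ (the merged vertex being both input and output). $\Theta(\mathcal{B})$ is the span of classes of graph monomials with $v_{\mathrm{in}}=v_{\mathrm{out}}$ or with a simple cycle through both $v_{\mathrm{in}}$ and $v_{\mathrm{out}}$. A test graph is a finite connected directed multigraph with labels in $\mathcal{A}$; $T^\pi$ identifies vertices in blocks of a partition $\pi$. Cactus: connected multigraph with each edge in exactly one simple cycle (loops, pairs of parallel edges count); pads = these cycles; oriented cactus: every pad directed. $\tau^0_\varphi[T]=\prod_{C\in\mathrm{Pads}(T)}\kappa_{n_C}[\gamma(e_1),\dots,\gamma(e_{n_C})]$ for oriented cacti (edges listed with $\mathrm{src}(e_i)=\mathrm{tgt}(e_{i+1})$, indices mod $n_C$), else $0$; $\tau_\varphi[T]=\sum_\pi\tau^0_\varphi[T^\pi]$ over partitions of the vertex set. $\psi(t)=\tau_\varphi[\tilde\Delta(t)]$ where $\tilde\Delta(t)$ identifies input and output and forgets roots. $s\equiv t\pmod\psi$ means $\psi((s-t)u)=0$ for all $u\in\mathcal{B}$. *)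

(* Defs.v *)
From HB Require Import structures.
From mathcomp Require Import all_boot all_order all_algebra.
From Stdlib Require Import ClassicalEpsilon.
Unset Printing Implicit Defensive.
Import GRing.Theory Num.Theory.

Definition pb (P : Prop) : bool :=
  if excluded_middle_informative P then true else false.

Definition noncrossing (n : nat) (P : {set {set 'I_n}}) : bool :=
  [forall B1 in P, forall B2 in P, (B1 != B2) ==>
     ~~ [exists a : 'I_n, exists b : 'I_n, exists c : 'I_n, exists d : 'I_n,
          [&& (a < b)%N, (b < c)%N, (c < d)%N, a \in B1, c \in B1,
              b \in B2 & d \in B2]]].

(* ---------- test graphs (labels in A) ----------
   vertex set = the finite set tVs inside the finite type tV,
   edges = elements of the finite type tE (multigraph, loops allowed). *)
Record tgraph (A : Type) := TGraph {
  tV : finType; tVs : {set tV}; tE : finType;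
  tsrc : tE -> tV; ttgt : tE -> tV; tlab : tE -> A }.
Arguments TGraph {A} tV tVs tE tsrc ttgt tlab.
Arguments tVs {A} t.
Arguments tV {A}.
Arguments tE {A}.
Arguments tsrc {A t}.
Arguments ttgt {A t}.
Arguments tlab {A t}.

Section TestGraphs.
Variable A : Type.
Implicit Types T : tgraph A.

Definition tgraph_wf T : Prop :=
  forall e, tsrc e \in tVs T /\ ttgt e \in tVs T.

Definition tadj T : rel (tV T) := fun v w =>
  [exists e : tE T, ((tsrc e == v) && (ttgt e == w))
                    || ((tsrc e == w) && (ttgt e == v))].

Definition tconnected T : Prop :=
  forall v w, v \in tVs T -> w \in tVs T -> connect (tadj T) v w.

(* s = [e_0;..;e_{k-1}] distinct edges, w = [w_0;..;w_{k-1}] distinct vertices,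
   e_i joins w_i and w_{i+1 mod k} (undirected): a simple cycle of the
   underlying undirected multigraph (k = 1: loop, k = 2: parallel pair). *)
Definition cycle_seq {T} (s : seq (tE T)) (w : seq (tV T)) : Prop :=
  [/\ (0 < size s)%N, size w = size s, uniq s, uniq w &
      all (fun p : tE T * (tV T * tV T) =>
             ((tsrc p.1 == p.2.1) && (ttgt p.1 == p.2.2))
             || ((tsrc p.1 == p.2.2) && (ttgt p.1 == p.2.1)))
          (zip s (zip w (rot 1 w)))].

Definition simple_cycle {T} (S : {set tE T}) : Prop :=
  exists s w, cycle_seq s w /\ S = [set e in s].

Definition cycle_through {T} (x y : tV T) : Prop :=
  exists s w, cycle_seq s w /\ x \in w /\ y \in w.

Definition cactus T : Prop :=
  tconnected T /\ forall e : tE T, exists! S, simple_cycle S /\ e \in S.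

Definition pads T : {set {set tE T}} := [set S | pb (simple_cycle S)].

Definition dir_order {T} (s : seq (tE T)) : bool :=
  all (fun p : tE T * tE T => tsrc p.1 == ttgt p.2) (zip s (rot 1 s)).

Definition pad_order {T} (S : {set tE T}) : option (seq (tE T)) :=
  ohead [seq s <- permutations (enum S) | dir_order s].

Definition oriented_cactus T : Prop :=
  cactus T /\ forall S, S \in pads T -> pad_order S != None.

Definition tquot {T} (P : {set {set tV T}}) : tgraph A :=
  TGraph {set tV T} P (tE T) (fun e => pblock P (tsrc e))
         (fun e => pblock P (ttgt e)) (@tlab A T).

Definition gmap {T} {W : finType} (f : tV T -> W) : tgraph A :=
  TGraph W (f @: tVs T) (tE T) (f \o @tsrc A T) (f \o @ttgt A T) (@tlab A T).

Definition ident {T} (x y : tV T) (v : tV T) : {set tV T} :=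
  if v \in [set x; y] then [set x; y] else [set v].

Definition tdisj (T1 T2 : tgraph A) : tgraph A :=
  TGraph (tV T1 + tV T2)%type (inl @: tVs T1 :|: inr @: tVs T2)
         (tE T1 + tE T2)%type
         (fun e => match e with inl e1 => inl (tsrc e1) | inr e2 => inr (tsrc e2) end)
         (fun e => match e with inl e1 => inl (ttgt e1) | inr e2 => inr (ttgt e2) end)
         (fun e => match e with inl e1 => tlab e1 | inr e2 => tlab e2 end).

Record gmono := GMono { gT : tgraph A; gin : tV gT; gout : tV gT }.

Definition gm_wf (t : gmono) : Prop :=
  [/\ tgraph_wf (gT t), gin t \in tVs (gT t), gout t \in tVs (gT t)
    & tconnected (gT t)].

Definition Delta (t : gmono) : gmono :=
  let f := ident (gin t) (gout t) in
  @GMono (gmap f) (f (gin t)) (f (gin t)).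

(* product t1 t2: identify input of t1 with output of t2;
   output of t1 is the output, input of t2 is the input *)
Definition gmul (t1 t2 : gmono) : gmono :=
  let G := tdisj (gT t1) (gT t2) in
  let f := @ident G (inl (gin t1)) (inr (gout t2)) in
  @GMono (gmap f) (f (inr (gin t2))) (f (inl (gout t1))).

End TestGraphs.
Arguments gT {A}. Arguments gin {A}. Arguments gout {A}. Arguments GMono {A}.
Arguments tgraph_wf {A}. Arguments tadj {A}. Arguments tconnected {A}.
Arguments cycle_seq {A T}. Arguments simple_cycle {A T}.
Arguments cycle_through {A T}. Arguments cactus {A}. Arguments pads {A}.
Arguments dir_order {A T}. Arguments pad_order {A T}.
Arguments oriented_cactus {A}. Arguments tquot {A T}. Arguments gmap {A T W}.
Arguments ident {A T}. Arguments tdisj {A}. Arguments gm_wf {A}.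
Arguments Delta {A}. Arguments gmul {A}.

Section Traffic.
Variables (C : numClosedFieldType) (A : algType C).
Variable kappa : seq A -> C.
Local Open Scope ring_scope.

Definition tau0 (T : tgraph A) : C :=
  if pb (oriented_cactus T) then
    \prod_(S in pads T)
       match pad_order S with
       | Some s => kappa [seq tlab e | e <- s]
       | None => 0
       end
  else 0.

Definition tau (T : tgraph A) : C :=
  \sum_(P : {set {set tV T}} | partition P (tVs T)) tau0 (tquot P).

Definition psi (t : gmono A) : C := tau (gT (Delta t)).

(* elements of B represented by formal linear combinations of graph monomials *)
Definition psiB (u : seq (C * gmono A)) : C := \sum_(x <- u) x.1 * psi x.2.

Definition mulB (u v : seq (C * gmono A)) : seq (C * gmono A) :=
  [seq (x.1 * y.1, gmul x.2 y.2) | x <- u, y <- v].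

End Traffic.
Arguments noncrossing {n}.
Arguments tau0 {C A}. Arguments tau {C A}. Arguments psi {C A}.
Arguments psiB {C A}. Arguments mulB {C A}.

(* Main.v *)
Require Import Defs.
From HB Require Import structures.
From mathcomp Require Import all_boot all_order all_algebra.
From Stdlib Require Import ClassicalEpsilon.
Set Warnings "-notation-overridden,-ambiguous-paths".
Set Implicit Arguments. Unset Strict Implicit.


Section Walks.
Variables (E V : eqType) (L : E -> V -> V -> bool).

Fixpoint walk (x : V) (p : seq (E * V)) (y : V) : Prop :=
  match p with
  | [::] => x = y
  | q :: p' => L q.1 x q.2 /\ walk q.2 p' y
  end.

Lemma walk_cat x p1 z p2 y : walk x p1 z -> walk z p2 y -> walk x (p1 ++ p2) y.
Proof.
elim: p1 x => [|q p1 IH] x /=; first by move=> ->.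
by case=> H1 H2 H3; split => //; apply: IH H2 H3.
Qed.

Lemma walk_split x p y v : v \in x :: map snd p -> walk x p y ->
  exists p1 p2, [/\ p = p1 ++ p2, walk x p1 v & walk v p2 y].
Proof.
elim: p x => [|q p IH] x /=.
  by rewrite inE => /eqP -> ->; exists [::], [::].
rewrite inE => /orP [/eqP ->|Hv] [H1 H2].
  by exists [::], (q :: p).
have [p1 [p2 [-> W1 W2]]] := IH _ Hv H2.
by exists (q :: p1), p2.
Qed.

Lemma walk_short x p y : walk x p y -> ~~ uniq (x :: map snd p) ->
  exists q, [/\ walk x q y, size q < size p & {subset map fst q <= map fst p}].
Proof.
elim: p x => [|q p IH] x //=.
case=> H1 H2; rewrite negb_and negbK => /orP [Hx|Hu].
  have [p1 [p2 [Ep W1 W2]]] := walk_split Hx H2.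
  exists p2; split => //; first by rewrite Ep size_cat ltnS leq_addl.
  by move=> f Hf; rewrite /= inE Ep map_cat mem_cat Hf !orbT.
have [q' [W' S' Sub']] := IH _ H2 Hu.
exists (q :: q'); split => //=.
by move=> f; rewrite !inE => /orP [->//|/Sub' ->]; rewrite orbT.
Qed.

Lemma walk_simple x p y : walk x p y ->
  exists q, [/\ walk x q y, uniq (x :: map snd q) & {subset map fst q <= map fst p}].
Proof.
move: {2}(size p) (leqnn (size p)) => n; elim: n p => [|n IH] p Hs W.
  by move: Hs; rewrite leqn0 => /nilP Ep; subst p; exists [::]; split.
case Hu: (uniq (x :: map snd p)); first by exists p; split.
have [q [Wq Sq Subq]] := walk_short W (negbT Hu).
have [r [Wr Ur Subr]] := IH q (leq_trans Sq Hs) Wq.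
by exists r; split => // f /Subr /Subq.
Qed.

End Walks.

Lemma walk_map (E V E' V' : eqType) (L : E -> V -> V -> bool) (L' : E' -> V' -> V' -> bool)
  (fe : E -> E') (fv : V -> V') x p y :
  (forall e a b, L e a b -> L' (fe e) (fv a) (fv b)) ->
  walk L x p y -> walk L' (fv x) (map (fun q => (fe q.1, fv q.2)) p) (fv y).
Proof.
move=> HL; elim: p x => [|q p IH] x /=; first by move=> ->.
by case=> H1 H2; split; [apply: HL | apply: IH].
Qed.


Section Graph.
Variables (A : Type) (T : tgraph A).

Definition lk (e : tE T) (a b : tV T) : bool :=
  ((tsrc e == a) && (ttgt e == b)) || ((tsrc e == b) && (ttgt e == a)).

Lemma lk_end e x v a b : lk e x v -> lk e a b -> x = a \/ x = b.
Proof.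
move=> /orP[]/andP[/eqP E1 /eqP E2] /orP[]/andP[/eqP E3 /eqP E4];
  [left|right|right|left]; congruence.
Qed.

Lemma walk_ends x p y f : walk lk x p y -> f \in map fst p ->
  tsrc f \in x :: map snd p /\ ttgt f \in x :: map snd p.
Proof.
elim: p x => [|q p IH] x //= [H1 H2]; rewrite inE => /orP [/eqP ->|Hf].
  by move: H1; rewrite /lk => /orP [/andP [/eqP -> /eqP ->]|/andP [/eqP -> /eqP ->]];
    rewrite !inE !eqxx ?orbT.
have [] := IH _ H2 Hf; rewrite !inE => -> ->; by rewrite !orbT.
Qed.

Lemma walk_edge_in v p y q : walk lk v p y -> q \in p ->
  exists a, a \in v :: map snd p /\ lk q.1 a q.2.
Proof.
elim: p v => [|q' p IH] v //= [H1 H2]; rewrite inE => /orP [/eqP ->|Hq].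
  by exists v; rewrite inE eqxx.
have [a [Ha Hl]] := IH _ H2 Hq; exists a; split => //.
by move: Ha; rewrite !inE => ->; rewrite orbT.
Qed.

Lemma walk_uniq_edges x p y : walk lk x p y -> uniq (x :: map snd p) ->
  uniq (map fst p).
Proof.
elim: p x => [|q p IH] x //= [H1 H2] /andP [Hx Hu].
rewrite (IH _ H2 Hu) andbT; apply/negP => /mapP [q' Hq' Eq].
have [a [Ha Hl]] := walk_edge_in H2 Hq'.
rewrite -Eq in Hl.
have [Ea|Eb] := lk_end H1 Hl.
  by move: Hx; rewrite Ea Ha.
by move: Hx; rewrite Eb inE (map_f snd Hq') orbT.
Qed.

Lemma walk_zip x p y : walk lk x p y ->
  all (fun p : tE T * (tV T * tV T) =>
             ((tsrc p.1 == p.2.1) && (ttgt p.1 == p.2.2))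
             || ((tsrc p.1 == p.2.2) && (ttgt p.1 == p.2.1)))
    (zip (map fst p) (zip (belast x (map snd p)) (map snd p))).
Proof.
elim: p x => [|q p IH] x //= [H1 H2].
by rewrite [X in X && _]H1 /=; apply: IH H2.
Qed.

Lemma walk_last x p y : walk lk x p y -> last x (map snd p) = y.
Proof. by elim: p x => [|q p IH] x //= [_ /IH]. Qed.

Lemma rot_belast (V : eqType) (x : V) s : s != [::] -> last x s = x ->
  rot 1 (belast x s) = s.
Proof.
case: s => [//|y s] _ /= Hl.
by rewrite rot1_cons [RHS]lastI Hl.
Qed.

Lemma walk_cycle x p : walk lk x p x -> p != [::] -> uniq (map snd p) ->
  uniq (map fst p) -> cycle_seq (map fst p) (belast x (map snd p)).
Proof.
move=> W Hp Us Uf.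
have Hr : rot 1 (belast x (map snd p)) = map snd p.
  by apply: rot_belast; [case: (p) Hp | apply: walk_last W].
split => //.
- by case: (p) Hp.
- by rewrite size_belast !size_map.
- by rewrite -(rot_uniq 1) Hr.
- by rewrite Hr; apply: walk_zip W.
Qed.

Lemma walk_closed (U : pred (tV T)) a p b : walk lk a p b -> a \in U ->
  (forall f, f \in map fst p -> tsrc f \in U /\ ttgt f \in U) -> b \in U.
Proof.
elim: p a => [|q p IH] a /=; first by move=> -> .
move=> [H1 H2] Ha HU; apply: (IH _ H2).
  have [Hs Ht] := HU q.1 (mem_head _ _).
  by case/orP: H1 => /andP[/eqP E1 /eqP E2]; [rewrite -E2|rewrite -E1].
by move=> f Hf; apply: HU; rewrite inE Hf orbT.
Qed.

Lemma cyc_from X Y e Z P1' p : walk lk Z P1' Y ->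
  uniq (X :: Z :: map snd P1') -> uniq (e :: map fst P1') -> lk e X Z ->
  walk lk Y p X -> e \notin map fst p ->
  exists R : seq (tE T * tV T), [/\ simple_cycle [set f in e :: map fst R],
     {subset map fst R <= map fst P1' ++ map fst p}
   & exists2 g, g \in map fst R & g \in map fst p].
Proof.
move=> W1 U1 Ue He W2 Hep.
have [R [WR UR SubR]] := walk_simple (walk_cat W1 W2).
have SubR' : {subset map fst R <= map fst P1' ++ map fst p}.
  by move=> f /SubR; rewrite map_cat.
exists R; split => //; last first.
  case Hh: (has (fun f => f \in map fst p) (map fst R)).
    by move/hasP: Hh => [g Hg1 Hg2]; exists g.
  exfalso; move/negbT/hasPn: Hh => Hh.
  have : X \in Z :: map snd P1'.
    apply: (walk_closed WR); first by rewrite mem_head.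
    move=> f Hf; apply: (walk_ends W1).
    by move: (SubR' f Hf); rewrite mem_cat (negbTE (Hh f Hf)) orbF.
  by move: U1 => /= /andP [/negP].
exists (map fst ((e, Z) :: R)), (belast X (map snd ((e, Z) :: R))); split => //.
apply: walk_cycle => //=; try by split.
rewrite (walk_uniq_edges WR UR) andbT; apply/negP => /SubR'.
rewrite mem_cat (negbTE Hep) orbF; by move: Ue => /= /andP [/negP].
Qed.

Lemma no_cactus3 X Y p1 p2 p3 : X != Y -> walk lk X p1 Y -> walk lk Y p2 X ->
  walk lk Y p3 X ->
  (forall f, f \in map fst p1 -> f \in map fst p2 -> False) ->
  (forall f, f \in map fst p1 -> f \in map fst p3 -> False) ->
  (forall f, f \in map fst p2 -> f \in map fst p3 -> False) ->
  ~ (forall e : tE T, exists! S, simple_cycle S /\ e \in S).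
Proof.
move=> XY W1 W2 W3 D12 D13 D23 Hc.
have [P [WP UP SubP]] := walk_simple W1.
case: P WP UP SubP => [/= EXY|[e Z] P1'] /=; first by move: XY; rewrite EXY eqxx.
move=> [He W1'] UP SubP.
have WW : walk lk X ((e, Z) :: P1') Y by split.
have Ue := walk_uniq_edges WW UP.
have Hep1 : e \in map fst p1 by apply: SubP; rewrite mem_head.
have [R2 [C2 S2 [g Hg2 Hgp2]]] :=
  cyc_from W1' UP Ue He W2 (introT negP (D12 e Hep1)).
have [R3 [C3 S3 _]] := cyc_from W1' UP Ue He W3 (introT negP (D13 e Hep1)).
have [S [_ US]] := Hc e.
have I2 : e \in [set f in e :: map fst R2] by rewrite inE mem_head.
have I3 : e \in [set f in e :: map fst R3] by rewrite inE mem_head.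
have E2 := US _ (conj C2 I2).
have E3 := US _ (conj C3 I3).
have : g \in [set f in e :: map fst R3] by rewrite -E3 E2 inE inE Hg2 orbT.
rewrite inE inE => /orP [/eqP Eg|/S3].
  by apply: (D12 e Hep1); rewrite -Eg.
rewrite mem_cat => /orP [Hg|Hg].
  by apply: (D12 g _ Hgp2); apply: SubP; rewrite inE Hg orbT.
by apply: (D23 g Hgp2 Hg).
Qed.

Lemma connect_walk u v : connect (tadj T) u v -> exists p, walk lk u p v.
Proof.
move/connectP => [pv Hp ->]; elim: pv u Hp => [|y pv IH] u /=; first by exists [::].
case/andP => /existsP [e He] /IH [p Hw]; exists ((e, y) :: p); split => //.
Qed.

Lemma zip_walk ws s x y : size s = (size ws).+1 ->
  all (fun p : tE T * (tV T * tV T) =>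
             ((tsrc p.1 == p.2.1) && (ttgt p.1 == p.2.2))
             || ((tsrc p.1 == p.2.2) && (ttgt p.1 == p.2.1)))
    (zip s (zip (x :: ws) (rcons ws y))) -> walk lk x (zip s (rcons ws y)) y.
Proof.
elim: ws s x => [|z ws IH] [|e s] x //=.
  by case: s => //= _ /andP [H _].
move=> [Hs] /andP [H1 H2]; split => //; exact: IH.
Qed.

Lemma cycle_walks s w u v : cycle_seq s w -> u \in w -> v \in w ->
  exists r1 r2, [/\ walk lk u r1 v, walk lk v r2 u &
    forall f, f \in map fst r1 -> f \in map fst r2 -> False].
Proof.
case=> H0 Hsz Us Uw Hall; case: w Hsz Uw Hall => [|x ws] //= Hsz Uw Hall Hu Hv.
rewrite rot1_cons in Hall.
have W := zip_walk (esym Hsz) Hall.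
set p := zip s (rcons ws x) in W.
have Hfst : map fst p = s by rewrite /p -/(unzip1 _) unzip1_zip // size_rcons Hsz.
have Hsnd : map snd p = rcons ws x by rewrite /p -/(unzip2 _) unzip2_zip // size_rcons Hsz.
have Hu' : u \in x :: map snd p by rewrite Hsnd; move: Hu; rewrite !inE mem_rcons inE => /orP [->|->]; rewrite ?orbT.
have [p1 [p2 [Ep W1 W2]]] := walk_split Hu' W.
have W' := walk_cat W2 W1.
have Hv' : v \in u :: map snd (p2 ++ p1).
  move: Hv; rewrite inE => /orP [/eqP ->|Hv].
    have := mem_last u (map snd p2); rewrite (walk_last W2) => H.
    by move: H; rewrite map_cat inE mem_cat => /orP [->|->]; rewrite ?orbT.
  have : v \in map snd p by rewrite Hsnd mem_rcons inE; apply/orP; right; exact: Hv.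
  by rewrite Ep !map_cat !mem_cat => /orP [->|->]; rewrite ?orbT.
have [r1 [r2 [Er W3 W4]]] := walk_split Hv' W'.
exists r1, r2; split => // f H1 H2.
have : uniq (map fst (r1 ++ r2)).
  by rewrite -Er map_cat uniq_catC -map_cat -Ep Hfst.
rewrite map_cat cat_uniq => /and3P [_ /hasPn Hn _].
by move: (Hn f H2); rewrite H1.
Qed.

End Graph.


Lemma pb_iff (P Q : Prop) : (P <-> Q) -> pb P = pb Q.
Proof.
rewrite /pb => H; case: excluded_middle_informative => HP;
  case: excluded_middle_informative => HQ //; exfalso; tauto.
Qed.

Lemma pbE (P : Prop) : pb P -> P.
Proof. by rewrite /pb; case: excluded_middle_informative. Qed.

Lemma pbT (P : Prop) : P -> pb P.
Proof. by rewrite /pb; case: excluded_middle_informative. Qed.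

Lemma all_rot' (T : eqType) (a : pred T) n s : all a (rot n s) = all a s.
Proof. by apply/allP/allP => H x Hx; apply: H; rewrite ?mem_rot in Hx *. Qed.

Section CycIn.
Variables (V E : eqType) (src tgt : E -> V) (D : pred V).
Hypothesis Hwf : forall e, src e \in D /\ tgt e \in D.

Lemma cyc_in s w w2 : size s = size w ->
  all (fun p : E * (V * V) =>
             ((src p.1 == p.2.1) && (tgt p.1 == p.2.2))
             || ((src p.1 == p.2.2) && (tgt p.1 == p.2.1)))
          (zip s (zip w w2)) -> size w2 = size w -> all D w.
Proof.
elim: w s w2 => [|a w IH] [|e s] [|b w2] //= [Es] /andP [H1 H2] [Ew].
rewrite (IH s w2 Es H2 Ew) andbT.
have [Hs Ht] := Hwf e.
by case/orP: H1 => /andP [/eqP E1 /eqP E2]; rewrite -?E1 -?E2.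
Qed.
End CycIn.

Section Iso.
Variables (A : Type) (V V' E : finType) (Vs : {set V}) (Vs' : {set V'})
  (src tgt : E -> V) (src' tgt' : E -> V') (lab : E -> A) (h : V -> V').
Hypotheses (Hinj : {in Vs &, injective h}) (HVs : Vs' = h @: Vs)
  (Hs : forall e, src' e = h (src e)) (Ht : forall e, tgt' e = h (tgt e))
  (Hwf : forall e, src e \in Vs /\ tgt e \in Vs).

Let T := TGraph V Vs E src tgt lab.
Let T' := TGraph V' Vs' E src' tgt' lab.

Lemma hinjE a b : a \in Vs -> b \in Vs -> (h a == h b) = (a == b).
Proof.
move=> Ha Hb; apply/eqP/eqP => [|-> //]; exact: Hinj.
Qed.

Lemma zip_tr s w w2 : all (mem Vs) w -> all (mem Vs) w2 ->
  all (fun p : E * (V' * V') =>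
             ((src' p.1 == p.2.1) && (tgt' p.1 == p.2.2))
             || ((src' p.1 == p.2.2) && (tgt' p.1 == p.2.1)))
      (zip s (zip (map h w) (map h w2)))
  = all (fun p : E * (V * V) =>
             ((src p.1 == p.2.1) && (tgt p.1 == p.2.2))
             || ((src p.1 == p.2.2) && (tgt p.1 == p.2.1)))
      (zip s (zip w w2)).
Proof.
elim: s w w2 => [|e s IH] [|a w] [|b w2] //= /andP [Ha Hw] /andP [Hb Hw2].
have [Hse Hte] := Hwf e.
by rewrite IH // !Hs !Ht !hinjE.
Qed.

Lemma cyc_fwd s w : @cycle_seq A T s w -> @cycle_seq A T' s (map h w).
Proof.
case=> [H0 Hsz Us Uw Hall].
have Hw : all (mem Vs) w.
  exact: (cyc_in Hwf (esym Hsz) Hall (size_rot 1 w)).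
split => //; first by rewrite size_map.
  by rewrite map_inj_in_uniq // => a b /(allP Hw) Ha /(allP Hw) Hb; apply: Hinj.
by rewrite -map_rot zip_tr // all_rot'.
Qed.

Lemma lift_seq (w' : seq V') : all (mem Vs') w' ->
  exists2 w, all (mem Vs) w & map h w = w'.
Proof.
elim: w' => [|a w' IH] /=; first by exists [::].
case/andP; rewrite HVs => /imsetP [b Hb ->]; rewrite -HVs => /IH [w Hw <-].
by exists (b :: w); rewrite //= Hb.
Qed.

Lemma cyc_bwd s w' : @cycle_seq A T' s w' -> exists w, @cycle_seq A T s w /\ w' = map h w.
Proof.
case=> [H0 Hsz Us Uw Hall].
have Hwf' : forall e, src' e \in Vs' /\ tgt' e \in Vs'.
  by move=> e; have [Hse Hte] := Hwf e; rewrite Hs Ht HVs !imset_f.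
have Hw' : all (mem Vs') w'.
  exact: (cyc_in Hwf' (esym Hsz) Hall (size_rot 1 w')).
have [w Hw Ew] := lift_seq Hw'.
exists w; split => //; subst w'.
split => //; first by rewrite -Hsz size_map.
  by move: Uw; rewrite map_inj_in_uniq // => a b /(allP Hw) Ha /(allP Hw) Hb; apply: Hinj.
by rewrite -zip_tr ?all_rot' // map_rot.
Qed.

Lemma simple_cycle_iso S : @simple_cycle A T S <-> @simple_cycle A T' S.
Proof.
split => [[s [w [Hc ->]]]|[s [w' [Hc ->]]]].
  by exists s, (map h w); split => //; apply: cyc_fwd.
have [w [Hc' _]] := cyc_bwd Hc.
by exists s, w.
Qed.

Lemma tadj_fwd a b : tadj T a b -> tadj T' (h a) (h b).
Proof.
move=> /existsP [e He]; apply/existsP; exists e; rewrite /= Hs Ht.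
by move: He => /= /orP [] /andP [/eqP -> /eqP ->]; rewrite !eqxx ?orbT.
Qed.

Lemma lift_path (p' : seq V') x : x \in Vs -> path (tadj T') (h x) p' ->
  exists p, [/\ path (tadj T) x p, map h p = p' & all (mem Vs) p].
Proof.
elim: p' x => [|y' p' IH] x Hx /=; first by exists [::].
case/andP => /existsP [e He] Hp.
have [Hse Hte] := Hwf e.
have [y [Hy Ey Hxy]] : exists y, [/\ y \in Vs, y' = h y & tadj T x y].
  move: He; rewrite /= Hs Ht hinjE //.
  case/orP => /andP [/eqP E1 /eqP E2].
    exists (tgt e); split => //; apply/existsP; exists e.
    by rewrite /= E1 !eqxx.
  move: E2 => /eqP; rewrite hinjE // => /eqP E2.
  exists (src e); split => //; apply/existsP; exists e.
  by rewrite /= E2 !eqxx orbT.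
move: Hp; rewrite Ey => /(IH _ Hy) [p [Hp Ep Hall]].
by exists (y :: p); rewrite /= Hxy Hp Ep Hy Hall.
Qed.

Lemma conn_iso : @tconnected A T <-> @tconnected A T'.
Proof.
split => H v w.
  rewrite /= HVs => /imsetP [a Ha ->] /imsetP [b Hb ->].
  have /connectP [p Hp Hl] := H a b Ha Hb.
  apply/connectP; exists (map h p); first exact: homo_path tadj_fwd Hp.
  by rewrite last_map Hl.
move=> /= Hv Hw.
have Hv' : h v \in Vs' by rewrite HVs imset_f.
have Hw' : h w \in Vs' by rewrite HVs imset_f.
have /connectP [p' Hp' Hl'] := H (h v) (h w) Hv' Hw'.
have [p [Hp Ep Hall]] := lift_path Hv Hp'.
apply/connectP; exists p => //.
have Hl : last v p \in Vs.
  by move: (mem_last v p); rewrite inE => /orP [/eqP ->|/(allP Hall)].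
by apply: Hinj => //; rewrite Hl' -Ep last_map.
Qed.

Lemma cactus_iso : @cactus A T <-> @cactus A T'.
Proof.
rewrite /cactus; split => [[H1 H2]|[H1 H2]]; split; try by apply/conn_iso.
  move=> e; have [S [[Hc He] HU]] := H2 e; exists S; split.
    by split => //; apply/simple_cycle_iso.
  by move=> S' [Hc' He']; apply: HU; split => //; apply/simple_cycle_iso.
move=> e; have [S [[Hc He] HU]] := H2 e; exists S; split.
  by split => //; apply/simple_cycle_iso.
by move=> S' [Hc' He']; apply: HU; split => //; apply/simple_cycle_iso.
Qed.

Lemma pads_iso : @pads A T = @pads A T'.
Proof. by apply/setP => S; rewrite !inE (pb_iff (simple_cycle_iso S)). Qed.

Lemma pad_order_iso S : @pad_order A T S = @pad_order A T' S.
Proof.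
rewrite /pad_order; congr ohead; apply: eq_filter => s.
rewrite /dir_order; apply: eq_all => p /=.
have [Hs1 _] := Hwf p.1; have [_ Ht2] := Hwf p.2.
by rewrite Hs Ht hinjE.
Qed.

Lemma oriented_iso : @oriented_cactus A T <-> @oriented_cactus A T'.
Proof.
rewrite /oriented_cactus pads_iso; split => [[H1 H2]|[H1 H2]]; split;
  try by apply/cactus_iso.
  by move=> S HS; rewrite -pad_order_iso; apply: H2.
by move=> S HS; rewrite pad_order_iso; apply: H2.
Qed.

End Iso.

Lemma tau0_iso (C : numClosedFieldType) (A : algType C) (kappa : seq A -> C)
  (V V' E : finType) (Vs : {set V}) (Vs' : {set V'})
  (src tgt : E -> V) (src' tgt' : E -> V') (lab : E -> A) (h : V -> V') :
  {in Vs &, injective h} -> Vs' = h @: Vs ->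
  (forall e, src' e = h (src e)) -> (forall e, tgt' e = h (tgt e)) ->
  (forall e, src e \in Vs /\ tgt e \in Vs) ->
  tau0 kappa (TGraph V Vs E src tgt lab) = tau0 kappa (TGraph V' Vs' E src' tgt' lab).
Proof.
move=> Hinj HVs Hs Ht Hwf; rewrite /tau0.
rewrite (pb_iff (oriented_iso lab Hinj HVs Hs Ht Hwf)).
rewrite (pads_iso lab Hinj HVs Hs Ht Hwf).
case: pb => //; apply: eq_bigr => S _.
by rewrite (@pad_order_iso _ _ _ _ _ Vs' _ _ _ _ lab h Hinj Hs Ht Hwf S).
Qed.


Lemma disjP (T : finType) (A B : {set T}) :
  reflect (forall x, x \in A -> x \in B -> False) [disjoint A & B].
Proof.
apply: (iffP pred0P) => [H x Ha Hb | H x].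
  by move: (H x); rewrite /= Ha Hb.
by apply/andP => -[]; exact: H.
Qed.

Section Part.
Variables (V W : finType) (D : {set V}) (F : V -> W).

Definition coarse (Q : {set {set V}}) : bool :=
  [forall x in D, forall y in D, (F x == F y) ==> (pblock Q x == pblock Q y)].

Lemma coarseP Q : reflect {in D &, forall x y, F x = F y -> pblock Q x = pblock Q y}
  (coarse Q).
Proof.
apply: (iffP forall_inP) => [H x y Hx Hy Exy|H x Hx].
  by have /forall_inP /(_ y Hy) := H x Hx; rewrite Exy eqxx => /eqP.
by apply/forall_inP => y Hy; apply/implyP => /eqP /(H x y Hx Hy) ->.
Qed.

Definition phiP (Q : {set {set V}}) : {set {set W}} := [set F @: (B : {set V}) | B in Q].
Definition psiP (P : {set {set W}}) : {set {set V}} :=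
  [set [set x in D | F x \in (B : {set W})] | B in P].

Section CP.
Variable Q : {set {set V}}.
Hypotheses (HQ : partition Q D) (HC : coarse Q).

Let covQ : cover Q = D. Proof. by case/and3P: HQ => /eqP. Qed.
Let trQ : trivIset Q. Proof. by case/and3P: HQ. Qed.
Let nQ : set0 \notin Q. Proof. by case/and3P: HQ. Qed.

Lemma sub_D B x : B \in Q -> x \in B -> x \in D.
Proof. by move=> HB Hx; rewrite -covQ; apply/bigcupP; exists B. Qed.

Lemma keyK B : B \in Q -> [set x in D | F x \in F @: B] = B.
Proof.
move=> HB; apply/setP => x; rewrite inE.
apply/andP/idP => [[Hx /imsetP [y Hy Exy]]|Hx].
  have HyD := sub_D HB Hy.
  rewrite -(def_pblock trQ HB Hy) -((coarseP _ HC) x y Hx HyD Exy).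
  by rewrite mem_pblock covQ.
by split; [apply: sub_D HB Hx | apply: imset_f].
Qed.

Lemma psi_phi : psiP (phiP Q) = Q.
Proof.
rewrite /psiP /phiP -imset_comp.
rewrite (eq_in_imset (g := id)); first by rewrite imset_id.
by move=> B HB /=; apply: keyK.
Qed.

Lemma phi_inj : {in Q &, injective (fun B : {set V} => F @: B)}.
Proof.
by move=> B1 B2 H1 H2 E; rewrite -(keyK H1) -(keyK H2) E.
Qed.

Lemma phi_part : partition (phiP Q) (F @: D).
Proof.
apply/and3P; split.
- apply/eqP/setP => w; apply/bigcupP/imsetP.
    move=> [C /imsetP [B HB ->] /imsetP [x Hx ->]].
    by exists x => //; apply: sub_D HB Hx.
  move=> [x Hx ->]; exists (F @: pblock Q x); last by rewrite imset_f // mem_pblock covQ.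
  by rewrite imset_f // pblock_mem // covQ.
- apply/trivIsetP => C1 C2 /imsetP [B1 H1 ->] /imsetP [B2 H2 ->] Hne.
  apply/disjP => w /imsetP [x1 Hx1 ->] /imsetP [x2 Hx2 E].
  move/negP: Hne; apply; apply/eqP; congr (F @: _).
  rewrite -(def_pblock trQ H1 Hx1) -(def_pblock trQ H2 Hx2).
  move/coarseP: HC => HC'.
  have HD1 := sub_D H1 Hx1. have HD2 := sub_D H2 Hx2.
  by rewrite (HC' x1 x2 HD1 HD2 E).
- apply/negP => /imsetP [B HB E].
  by move/negP: nQ; apply; move/esym/eqP: E; rewrite imset_eq0 => /eqP <-.
Qed.

Lemma pblock_phi v : v \in D -> pblock (phiP Q) (F v) = F @: pblock Q v.
Proof.
move=> Hv; case/and3P: phi_part => _ trP _.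
apply: def_pblock => //; first by rewrite imset_f // pblock_mem // covQ.
by rewrite imset_f // mem_pblock covQ.
Qed.

End CP.

Section PP.
Variable P : {set {set W}}.
Hypothesis HP : partition P (F @: D).

Let covP : cover P = F @: D. Proof. by case/and3P: HP => /eqP. Qed.
Let trP : trivIset P. Proof. by case/and3P: HP. Qed.
Let nP : set0 \notin P. Proof. by case/and3P: HP. Qed.

Lemma subW B w : B \in P -> w \in B -> w \in F @: D.
Proof. by move=> HB Hw; rewrite -covP; apply/bigcupP; exists B. Qed.

Lemma phi_psi : phiP (psiP P) = P.
Proof.
rewrite /psiP /phiP -imset_comp.
rewrite (eq_in_imset (g := id)); first by rewrite imset_id.
move=> B HB /=; apply/setP => w; apply/imsetP/idP.
  by move=> [x]; rewrite inE => /andP [_ Hx] ->.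
move=> Hw; have /imsetP [x Hx Ew] := subW HB Hw.
by exists x; rewrite // inE Hx -Ew.
Qed.

Lemma psi_part : partition (psiP P) D.
Proof.
apply/and3P; split.
- apply/eqP/setP => x; apply/bigcupP/idP.
    by move=> [C /imsetP [B HB ->]]; rewrite inE => /andP [].
  move=> Hx; have HF : F x \in cover P by rewrite covP imset_f.
  exists [set y in D | F y \in pblock P (F x)].
    by rewrite imset_f // pblock_mem.
  by rewrite inE Hx mem_pblock.
- apply/trivIsetP => C1 C2 /imsetP [B1 H1 ->] /imsetP [B2 H2 ->] Hne.
  apply/disjP => x; rewrite !inE => /andP [Hx Hx1] /andP [_ Hx2].
  move/negP: Hne; apply; apply/eqP; congr [set y in D | F y \in _].
  by rewrite -(def_pblock trP H1 Hx1) -(def_pblock trP H2 Hx2).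
- apply/negP => /imsetP [B HB E].
  have : B != set0 by apply: contraNneq nP => <-.
  case/set0Pn => w Hw; have /imsetP [x Hx Ew] := subW HB Hw.
  have : x \in [set y in D | F y \in B] by rewrite inE Hx -Ew.
  by rewrite -E inE.
Qed.

Lemma psi_coarse : coarse (psiP P).
Proof.
have trQ : trivIset (psiP P) by case/and3P: psi_part.
have Hb : forall x, x \in D -> pblock (psiP P) x = [set y in D | F y \in pblock P (F x)].
  move=> x Hx; have HF : F x \in cover P by rewrite covP imset_f.
  apply: def_pblock => //; first by rewrite imset_f // pblock_mem.
  by rewrite inE Hx mem_pblock.
by apply/coarseP => x y Hx Hy E; rewrite !Hb // E.
Qed.

End PP.

End Part.


Lemma tau_image (C : numClosedFieldType) (A : algType C) (kappa : seq A -> C)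
  (G : tgraph A) (W : finType) (Ws : {set W}) (src' tgt' : tE G -> W)
  (F : tV G -> W) :
  tgraph_wf G -> Ws = F @: tVs G ->
  (forall e, src' e = F (tsrc e)) -> (forall e, tgt' e = F (ttgt e)) ->
  tau kappa (TGraph W Ws (tE G) src' tgt' (@tlab A G)) =
  (\sum_(Q : {set {set tV G}} | partition Q (tVs G) && coarse (tVs G) F Q)
     tau0 kappa (tquot Q))%R.
Proof.
move=> Hwf -> Hs Ht; rewrite /tau /=.
rewrite (reindex_onto (phiP F) (psiP (tVs G) F)) /=; last first.
  by move=> P HP; apply: phi_psi.
have Hc : forall Q, partition (phiP F Q) (F @: tVs G) && (psiP (tVs G) F (phiP F Q) == Q)
    = partition Q (tVs G) && coarse (tVs G) F Q.
  move=> Q; apply/andP/andP => [[Hp /eqP E]|[Hp Hc]].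
    by rewrite -E; split; [apply: psi_part | apply: psi_coarse].
  by split; [apply: phi_part | rewrite psi_phi].
apply: eq_big => // Q; rewrite Hc => /andP [HQ HC].
have covQ : cover Q = tVs G by case/and3P: HQ => /eqP.
symmetry. rewrite /tquot /=. eapply (@tau0_iso _ _ _ _ _ _ _ _ _ _ _ _ _ (fun B : {set tV G} => F @: B)).
- exact: (phi_inj HQ HC).
- by [].
- move=> e /=; rewrite Hs (pblock_phi HQ HC) //; by case: (Hwf e).
- move=> e /=; rewrite Ht (pblock_phi HQ HC) //; by case: (Hwf e).
- move=> e /=; case: (Hwf e) => H1 H2; rewrite !pblock_mem // covQ //.
Qed.


Lemma ident_eq (A : Type) (T : tgraph A) (x y u v : tV T) :
  ident x y u = ident x y v <-> u = v \/ (u \in [set x; y] /\ v \in [set x; y]).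
Proof.
rewrite /ident; case: ifP => Hu; case: ifP => Hv.
- by split => // _; right.
- split => [E|[E|[_ Hv']]]; last by rewrite Hv' in Hv.
    have : x \in [set v] by rewrite -E !inE eqxx.
    by rewrite inE => /eqP Ex; rewrite -Ex !inE eqxx in Hv.
  by subst; rewrite Hu in Hv.
- split => [E|[E|[Hu' _]]]; last by rewrite Hu' in Hu.
    have : x \in [set u] by rewrite E !inE eqxx.
    by rewrite inE => /eqP Ex; rewrite -Ex !inE eqxx in Hu.
  by subst; rewrite Hu in Hv.
- split => [/set1_inj ->|[->//|[Hu' _]]]; first by left.
  by rewrite Hu' in Hu.
Qed.

Lemma coarse_ident (A : Type) (V : finType) (T : tgraph A) (D : {set V})
  (Q : {set {set V}}) (F : V -> {set tV T}) (k : V -> tV T) a b :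
  a \in D -> b \in D -> (forall v, F v = ident (k a) (k b) (k v)) ->
  coarse D F Q = coarse D k Q && (pblock Q a == pblock Q b).
Proof.
move=> Ha Hb HF; apply/coarseP/andP => [H|[/coarseP Hk /eqP Hab]].
  split; last first.
    apply/eqP; apply: H => //; rewrite !HF; apply/ident_eq; right.
    by rewrite !inE !eqxx ?orbT.
  by apply/coarseP => x y Hx Hy E; apply: H => //; rewrite !HF E.
move=> x y Hx Hy; rewrite !HF => /ident_eq [E|[Hx' Hy']]; first exact: Hk.
have Hc : forall z, z \in D -> k z \in [set k a; k b] -> pblock Q z = pblock Q a.
  move=> z Hz; rewrite !inE => /orP [/eqP E|/eqP E].
    exact: Hk.
  by rewrite Hab; apply: Hk.
by rewrite (Hc x) // (Hc y).
Qed.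

Lemma coarse_id (V : finType) (D : {set V}) Q : coarse D id Q.
Proof. by apply/coarseP => x y _ _ ->. Qed.

Lemma coarse_ext (V W : finType) (D : {set V}) (F F' : V -> W) Q :
  F =1 F' -> coarse D F Q = coarse D F' Q.
Proof.
move=> E; apply/coarseP/coarseP => H x y Hx Hy Exy; apply: H => //.
  by rewrite !E.
by rewrite -!E.
Qed.

Import GRing.Theory.

Section Key.
Variables (C : numClosedFieldType) (A : algType C) (kappa : seq A -> C).
Variables (t s : gmono A).
Hypotheses (Ht : gm_wf t) (Hs : gm_wf s).

Let Gt := gT t.
Let Gs := gT s.
Let G := tdisj Gt Gs.
Let D := tVs G.
Let it : tV G := inl (gin t).
Let ot : tV G := inl (gout t).
Let ins : tV G := inr (gin s).
Let ous : tV G := inr (gout s).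

Lemma wfG : tgraph_wf G.
Proof.
case: Ht => Hwt _ _ _; case: Hs => Hws _ _ _.
move=> [e|e] /=.
  by case: (Hwt e) => H1 H2; rewrite !inE !imset_f.
by case: (Hws e) => H1 H2; rewrite !inE !imset_f ?orbT.
Qed.

Lemma memD : [/\ it \in D, ot \in D, ins \in D & ous \in D].
Proof.
case: Ht => _ H1 H2 _; case: Hs => _ H3 H4 _.
by rewrite /D /= !inE !imset_f ?orbT.
Qed.

Let f1 := @ident A G it ous.
Let f2 := @ident A (gmap f1) (f1 ins) (f1 ot).
Let F1 := fun v => f2 (f1 v).

Lemma E1 : psi kappa (gmul t s) =
  (\sum_(Q : {set {set tV G}} | partition Q D && coarse D F1 Q) tau0 kappa (tquot Q))%R.
Proof.
rewrite /psi /Delta /gmul /=.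
apply: (@tau_image _ _ kappa G _ _ _ _ F1) => //; first exact: wfG.
by rewrite -imset_comp.
Qed.

Let g := @ident A Gt (gin t) (gout t).
Let G' := tdisj (gmap g) Gs.
Let sm : tV G -> tV G' :=
  fun v => match v with inl x => inl (g x) | inr y => inr y end.
Let f1' := @ident A G' (inl (g (gin t))) (inr (gout s)).
Let f2' := @ident A (gmap f1') (f1' (inr (gin s))) (f1' (inl (g (gin t)))).
Let F2 := fun v => f2' (f1' (sm v)).

Lemma smD : tVs G' = sm @: D.
Proof.
by rewrite /D /G' /G /= imsetU -!imset_comp; congr (_ :|: _).
Qed.

Lemma E2 : psi kappa (gmul (Delta t) s) =
  (\sum_(Q : {set {set tV G}} | partition Q D && coarse D F2 Q) tau0 kappa (tquot Q))%R.
Proof.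
rewrite /psi /Delta /gmul /=.
apply: (@tau_image _ _ kappa G _ _ _ _ F2) => //; first exact: wfG.
- have -> : tVs (gmap f1') = f1' @: (sm @: D) by rewrite -smD.
  by rewrite -!imset_comp.
- by case.
- by case.
Qed.

Lemma C1 Q : coarse D F1 Q =
  (pblock Q it == pblock Q ous) && (pblock Q ins == pblock Q ot).
Proof.
have [Hit Hot Hins Hous] := memD.
rewrite (@coarse_ident _ _ (gmap f1) D Q F1 f1 ins ot) //.
by rewrite (@coarse_ident _ _ G D Q f1 id it ous) // coarse_id.
Qed.

Lemma coarse_sm Q : coarse D sm Q = (pblock Q it == pblock Q ot).
Proof.
have [Hit Hot _ _] := memD.
apply/coarseP/eqP => [H|E].
  apply: H => //; rewrite /sm /it /ot; congr inl; apply/ident_eq; right.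
  by rewrite !inE !eqxx ?orbT.
move=> [x|x] [y|y] Hx Hy //= [Exy].
  move/ident_eq: Exy => [->//|[Hx' Hy']].
  have Hc : forall z, z \in [set gin t; gout t] -> pblock Q (inl z : tV G) = pblock Q it.
    by move=> z; rewrite !inE => /orP [] /eqP ->.
  by rewrite (Hc x) // (Hc y).
by rewrite Exy.
Qed.

Lemma C2 Q : coarse D F2 Q =
  [&& pblock Q it == pblock Q ot, pblock Q it == pblock Q ous & pblock Q ins == pblock Q it].
Proof.
have [Hit Hot Hins Hous] := memD.
rewrite (@coarse_ident _ _ (gmap f1') D Q F2 (fun v => f1' (sm v)) ins it) //.
rewrite (@coarse_ident _ _ G' D Q (fun v => f1' (sm v)) sm it ous) // coarse_sm.
by rewrite andbA.
Qed.

Lemma fst_map (E E' V V' : eqType) (fe : E -> E') (fv : V -> V') r f :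
  f \in map fst (map (fun q => (fe q.1, fv q.2)) r) ->
  exists2 x, x \in map fst r & f = fe x.
Proof.
rewrite -map_comp => /mapP [q Hq ->]; exists q.1 => //; exact: map_f.
Qed.

Lemma zero Q : partition Q D -> pblock Q it = pblock Q ous ->
  pblock Q ins = pblock Q ot -> pblock Q it != pblock Q ot ->
  cycle_through (gin t) (gout t) -> tau0 kappa (tquot Q) = 0%R.
Proof.
move=> HQ Ea Ep Hne [sw [ww [Hcyc [Hin Hout]]]].
have [r1 [r2 [W1 W2 D12]]] := cycle_walks Hcyc Hin Hout.
case: Hs => _ Hins Hous Hcon.
have [r3 W3] := connect_walk (Hcon _ _ Hins Hous).
pose H := tquot Q.
have Lt : forall e u v, lk (T:=Gt) e u v ->
    lk (T:=H) (inl e) (pblock Q (inl u : tV G)) (pblock Q (inl v : tV G)).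
  by move=> e u v /orP [] /andP [/eqP E1 /eqP E2]; rewrite /lk /= E1 E2 !eqxx ?orbT.
have Ls : forall e u v, lk (T:=Gs) e u v ->
    lk (T:=H) (inr e) (pblock Q (inr u : tV G)) (pblock Q (inr v : tV G)).
  by move=> e u v /orP [] /andP [/eqP E1 /eqP E2]; rewrite /lk /= E1 E2 !eqxx ?orbT.
have W1' := walk_map Lt W1.
have W2' := walk_map Lt W2.
have W3' := walk_map Ls W3.
have W3'' : walk (lk (T:=H)) (pblock Q ot) (map (fun q => (inr q.1, pblock Q (inr q.2 : tV G))) r3) (pblock Q it).
  by rewrite -Ep Ea.
have Hne' : (pblock Q it : tV H) != (pblock Q ot : tV H) by [].
have NC := @no_cactus3 A H _ _ _ _ _ Hne' W1' W2' W3''.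
have NC' : ~ oriented_cactus H.
  move=> [[_ Hc] _]; apply: NC.
  - move=> f /mapP [q1 /mapP [x1 H1 ->] ->] /mapP [q2 /mapP [x2 H2 ->]] /= [E].
    by apply: (D12 x1.1); [apply: map_f | rewrite E; apply: map_f].
  - by move=> f /mapP [q1 /mapP [x1 H1 ->] ->] /mapP [q2 /mapP [x2 H2 ->]].
  - by move=> f /mapP [q1 /mapP [x1 H1 ->] ->] /mapP [q2 /mapP [x2 H2 ->]].
  - exact: Hc.
rewrite /tau0; case: pb (@pbE (oriented_cactus H)) => // /(_ isT) Hoc.
by case: NC'.
Qed.

Lemma key : gin t = gout t \/ cycle_through (gin t) (gout t) ->
  psi kappa (gmul t s) = psi kappa (gmul (Delta t) s).
Proof.
move=> Hth; rewrite E1 E2.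
rewrite (bigID (fun Q => pblock Q it == pblock Q ot)) /=.
have Z : (\sum_(Q : {set {set tV G}} | (partition Q D && coarse D F1 Q) &&
      ~~ (pblock Q it == pblock Q ot)) tau0 kappa (tquot Q) = 0)%R.
  apply: big1 => Q /andP [/andP [HQ]]; rewrite C1 => /andP [/eqP Ea /eqP Ep] Hne.
  case: Hth => [Eio|Hc]; last exact: zero.
  by move: Hne; rewrite /it /ot Eio eqxx.
rewrite Z GRing.addr0; apply: eq_bigl => Q; rewrite C1 C2.
case: (pblock Q it =P pblock Q ot) => [E|_]; last by rewrite !andbF.
rewrite E ?eqxx.
by case: (partition Q D); case: (pblock Q ot == pblock Q ous);
  case: (pblock Q ins == pblock Q ot).
Qed.

End Key.

Unset Implicit Arguments. Set Strict Implicit.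
Import GRing.Theory Num.Theory.
Local Open Scope ring_scope.

Theorem corollary2p10
  (C : numClosedFieldType) (A : algType C) (phi : A -> C) (kappa : seq A -> C)
  (phi_lin : forall (c : C) (a b : A), phi (c *: a + b) = c * phi a + phi b)
  (phi_unit : phi 1 = 1)
  (phi_trace : forall a b : A, phi (a * b) = phi (b * a))
  (kappa_free : forall s : seq A,
     phi (\prod_(a <- s) a) =
     \sum_(P : {set {set 'I_(size s)}} |
             partition P [set: 'I_(size s)] && noncrossing P)
        \prod_(B in P) kappa [seq nth 0 s (val i) | i <- enum B])
  (t : gmono A)
  (t_wf : gm_wf t)
  (t_Theta : gin t = gout t \/ cycle_through (gin t) (gout t))
  (u : seq (C * gmono A))
  (u_wf : forall x, List.In x u -> gm_wf x.2) :
  psiB kappa (mulB [:: (1, t); (-1, Delta t)] u) = 0.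
Proof.
rewrite /psiB /mulB /=.
rewrite cats0 big_cat !big_map /= -big_split /=.
elim: u u_wf => [|y u IH] Hwf; first by rewrite big_nil.
rewrite big_cons IH; last by move=> x Hx; apply: Hwf; right.
rewrite (key kappa t_wf (Hwf y (or_introl erefl)) t_Theta).
by rewrite mul1r mulN1r mulNr addrN add0r.
Qed.
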